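(* Consider the client selection problem and the COCS policy described in the context, run with input parameters $K(t)=t^{z}\log(t)$ and $h_T=\lceil T^{\gamma}\rceil$, where $0<z<1$ and $0<\gamma<\frac12$. Then the expected regret incurred in exploration rounds satisfies $$\mathbb{E}[R_{\text{explore}}(T)]\le \frac{4N^2MB}{c^{\min}}\left(T^{z+2\gamma}\log(T)+T^{2\gamma}\right),$$ where $c^{\min}=\min_{n,t}c_n(y_n^t)$.
   Context: Setting. There are $N$ clients indexed by $\mathcal N=\{1,\dots,N\}$, $M$ edge servers (ESs) indexed by $\mathcal M=\{1,\dots,M\}$, and rounds $t=1,\dots,T$. In round $t$, ES $m$ can communicate with a set $\mathcal N_m^t\subseteq\mathcal N$ of clients (these sets may overlap). Each client $n$ reveals computation resources $y_n^t$ and charges a cost $c_n(y_n^t)>0$, with $c_n$ nondecreasing; $c^{\min}=\min_{n,t}c_n(y_n^t)$. Each ES has budget $B>0$. A feasible client selection decision in round $t$ is $\bm s^t=(\bm s_1^t,\dots,\bm s_M^t)$ with $\bm s_m^t\subseteq\mathcal N_m^t$, $\sum_{n\in\bm s_m^t}c_n(y_n^t)\le B$ for every $m$, and $\bm s_m^t\cap\bm s_{m'}^t=\emptyset$ for $m\neq m'$. Each client-ES pair $(n,m)$ with $n\in\mathcal N_m^t$ has an observed context $\phi_{n,m}^t\in\Phi=[0,1]^2$. If client $n$ is selected by ES $m$ in round $t$, its participation indicator $X_{n,m}^t\in\{0,1\}$ is Bernoulli with mean $p_{n,m}(\phi_{n,m}^t)$, where $p_{n,m}:\Phi\to[0,1]$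 is unknown. The utility is $\mu(\bm s^t;\bm X^t)=\frac1M\sum_{m\in\mathcal M}\sum_{n\in\bm s_m^t}X_{n,m}^t$ (and $\mu(\bm s;\bm p^t)$ is the same expression with $p_{n,m}(\phi^t_{n,m})$ in place of $X^t_{n,m}$). The oracle decision $\bm s^{\mathrm{opt},t}$ maximizes $\mu(\bm s;\bm p^t)$ over feasible decisions. The expected regret of a policy choosing $\bm s^1,\dots,\bm s^T$ is $\mathbb E[R(T)]=\sum_{t=1}^T(\mathbb E[\mu(\bm s^{\mathrm{opt},t};\bm X^t)]-\mathbb E[\mu(\bm s^t;\bm X^t)])$. COCS policy (inputs: increasing function $K$, integer $h_T$). Partition $\Phi$ into $h_T^2$ squares of side $1/h_T$. For each pair $(n,m)$ and square $l$ keep a counter $C_{n,m}(l)$ (initially $0$) and an estimate $\hat p_{n,m}(l)$ equal to the sample mean of the indicators observed when $n$ was selected by $m$ with context in $l$ (initially $0$). In round $t$: observe all contexts, let $l^t_{n,m}$ be the square containing $\phi^t_{n,m}$ and set $\hat X^t_{n,m}=\hat p_{n,m}(l^t_{n,m})$; a pair is under-explored if $C_{n,m}(l^t_{n,m})\le K(t)$. If an under-explored pair exists (exploration round), select a feasible decision that first maximizes the number of selected under-explored clients and then spends the remaining per-ES budget on explored clients so as to maximize $\mu(\cdot;\hat{\bm X}^t)$ (when every ES has under-explored clients, simply a feasible decision of maximum cardinality). Otherwise (exploitation round), select a feasible $\bm s^t$ maximizing $\mu(\bm s;\hat{\bm X}^t)$. At the end of the round, for each selected pair observe $X^t_{n,m}$,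 update $\hat p_{n,m}(l^t_{n,m})$ as a running mean and increment $C_{n,m}(l^t_{n,m})$. $R_{\text{explore}}(T)$ and $R_{\text{exploit}}(T)$ denote the parts of the regret summed over exploration rounds and over exploitation rounds respectively, so $R(T)=R_{\text{explore}}(T)+R_{\text{exploit}}(T)$. *)

(* Defs.v *)
From HB Require Import structures.
From mathcomp Require Import all_boot all_order all_algebra.
From mathcomp Require Import all_classical all_reals exp.
Set Implicit Arguments. Unset Strict Implicit. Unset Printing Implicit Defensive.
Import Order.TTheory GRing.Theory Num.Theory.
Local Open Scope ring_scope.

Section COCS.
Variables (R : realType) (N M : nat).

(* A client selection decision: for each ES m, the set s m of clients it selects. *)
Definition decision := 'I_M -> {set 'I_N}.

(* Feasibility in a round, given the communication sets Nt m = N_m^t and the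
   client costs cost n = c_n(y_n^t). *)
Definition feasible (Nt : decision) (cost : 'I_N -> R) (B : R) (s : decision) : Prop :=
  [/\ forall m, s m \subset Nt m,
      forall m, \sum_(n in s m) cost n <= B &
      forall m m', m != m' -> [disjoint s m & s m']].

Definition util (s : decision) (v : 'I_N -> 'I_M -> R) : R :=
  M%:R^-1 * \sum_(m < M) \sum_(n in s m) v n m.

Definition is_oracle (Nt : decision) (cost : 'I_N -> R) (B : R)
    (pt : 'I_N -> 'I_M -> R) (s : decision) : Prop :=
  feasible Nt cost B s /\ forall s', feasible Nt cost B s' -> util s' pt <= util s pt.

Definition is_cmin (T : nat) (c : 'I_N -> R -> R) (y : nat -> 'I_N -> R) (cm : R) : Prop :=
  (forall n t, (1 <= t <= T)%N -> cm <= c n (y t n)) /\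
  (exists n t, (1 <= t <= T)%N /\ c n (y t n) = cm).

Definition hT (T : nat) (gamma : R) : nat := `|Num.ceil ((T%:R : R) `^ gamma)|%N.

Definition Kfun (z : R) (t : nat) : R := (t%:R : R) `^ z * ln (t%:R : R).

(* Index of the square of side 1/h containing x in [0,1]^2 (squares indexed by
   (i,j) with 0 <= i,j < h; points on the right/top boundary 1 go to the last square). *)
Definition cell (h : nat) (x : R * R) : nat * nat :=
  (minn (Num.truncn (x.1 * h%:R)) h.-1, minn (Num.truncn (x.2 * h%:R)) h.-1).

Definition in_unit_square (x : R * R) : Prop := 0 <= x.1 <= 1 /\ 0 <= x.2 <= 1.

Section Run.
(* A single realization: decisions s t, contexts phi t n m, indicators X t n m. *)
Variables (h : nat) (phi : nat -> 'I_N -> 'I_M -> R * R)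
          (s : nat -> decision) (X : nat -> 'I_N -> 'I_M -> R).

Definition hit (n : 'I_N) (m : 'I_M) (l : nat * nat) (tau : nat) : bool :=
  (n \in s tau m) && (cell h (phi tau n m) == l).

Definition counter (t : nat) (n : 'I_N) (m : 'I_M) (l : nat * nat) : nat :=
  size [seq tau <- iota 1 t.-1 | hit n m l tau].

Definition estimate (t : nat) (n : 'I_N) (m : 'I_M) (l : nat * nat) : R :=
  if counter t n m l == 0%N then 0
  else (\sum_(tau <- iota 1 t.-1 | hit n m l tau) X tau n m) / (counter t n m l)%:R.

Definition Xhat (t : nat) (n : 'I_N) (m : 'I_M) : R :=
  estimate t n m (cell h (phi t n m)).

Variables (K : nat -> R) (Nset : nat -> decision).

Definition under_explored (t : nat) (n : 'I_N) (m : 'I_M) : bool :=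
  (n \in Nset t m) && ((counter t n m (cell h (phi t n m)))%:R <= K t).

Definition exploration_round (t : nat) : bool :=
  [exists m, exists n, under_explored t n m].

Definition n_under (t : nat) (d : decision) : nat :=
  \sum_(m < M) #|[set n in d m | under_explored t n m]|.

Variables (cost : nat -> 'I_N -> R) (B : R).

Definition cocs_round (t : nat) : Prop :=
  let D := feasible (Nset t) (cost t) B in
  if exploration_round t then
    [/\ D (s t),
        (forall d, D d -> (n_under t d <= n_under t (s t))%N) &
        (~~ [forall m, exists n, under_explored t n m] ->
         forall d, D d ->
           (forall m, [set n in d m | under_explored t n m]
                      = [set n in s t m | under_explored t n m]) ->
           util d (Xhat t) <= util (s t) (Xhat t))]
  else D (s t) /\ (forall d, D d -> util d (Xhat t) <= util (s t) (Xhat t)).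

End Run.

Definition regret_explore (T : nat) (h : nat) (phi : nat -> 'I_N -> 'I_M -> R * R)
    (K : nat -> R) (Nset : nat -> decision) (sopt : nat -> decision)
    (s : nat -> decision) (X : nat -> 'I_N -> 'I_M -> R) : R :=
  \sum_(1 <= t < T.+1 | exploration_round h phi s K Nset t)
     (util (sopt t) (X t) - util (s t) (X t)).

End COCS.

(* Main.v *)
Require Import Defs.
From HB Require Import structures.
From mathcomp Require Import all_boot all_order all_algebra.
From mathcomp Require Import all_classical all_reals exp.
Import Order.TTheory GRing.Theory Num.Theory.
Local Open Scope ring_scope.
From mathcomp Require Import ring lra.

Lemma count_key (R : realType) (T : nat) (Q hitp : pred nat) (cnt : nat -> nat) (Kmax : R) :
  0 <= Kmax ->
  (forall t, cnt t = count hitp (iota 1 t.-1)) ->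
  subpred Q hitp ->
  (forall t, (1 <= t <= T)%N -> Q t -> (cnt t)%:R <= Kmax) ->
  forall T', (T' <= T)%N -> ((count Q (iota 1 T'))%:R : R) <= Kmax + 1.
Proof.
move=> K0 cntE sQ HK; elim=> [|T' IH] hT.
  by rewrite addr_ge0.
have -> : iota 1 T'.+1 = iota 1 T' ++ [:: T'.+1] by rewrite -{1}[T'.+1]addn1 iotaD add1n.
rewrite count_cat /= addn0 natrD.
case: (boolP (Q T'.+1)) => QT /=.
  rewrite lerD2r; apply: le_trans (HK _ _ QT); last by rewrite /= hT.
  by rewrite ler_nat cntE /=; apply: sub_count.
by rewrite addr0; apply: IH; apply: ltnW.
Qed.

Lemma count_cover (K : finType) (E : pred nat) (Q : K -> pred nat) (s : seq nat) :
  (forall t, t \in s -> E t -> exists k, Q k t) ->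
  (count E s <= \sum_(k : K) count (Q k) s)%N.
Proof.
elim: s => [|x s IH] H /=; first by rewrite big1.
rewrite big_split /=; apply: leq_add; last first.
  by apply: IH => t ts; apply: H; rewrite inE ts orbT.
case: (boolP (E x)) => // Ex.
have [k Qk] := H x (mem_head _ _) Ex.
by rewrite (bigD1 k) //= Qk.
Qed.

Lemma util_ge0 (R : realType) N M (d : decision N M) (v : 'I_N -> 'I_M -> R) :
  (forall n m, 0 <= v n m) -> 0 <= util d v.
Proof.
move=> H; rewrite /util mulr_ge0 //; first by rewrite invr_ge0.
by apply: sumr_ge0 => m _; apply: sumr_ge0.
Qed.

Lemma util_le (R : realType) N M (Nt : decision N M) (cost : 'I_N -> R) B d v cm :
  feasible Nt cost B d -> 0 < cm -> 0 <= B -> (forall n, cm <= cost n) ->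
  (forall n m, v n m <= 1) -> util d v <= B / cm.
Proof.
move=> [_ Hc _] cm0 B0 Hcm Hv.
have inner : forall m, \sum_(n in d m) v n m <= B / cm.
  move=> m; apply: (@le_trans _ _ (\sum_(n in d m) (1 : R))).
    by apply: ler_sum => n _; apply: Hv.
  rewrite sumr_const ler_pdivlMr // -mulr_natl mulr1.
  apply: (le_trans _ (Hc m)); rewrite mulr_natl -sumr_const.
  by apply: ler_sum.
rewrite /util.
have : \sum_(m < M) \sum_(n in d m) v n m <= M%:R * (B / cm).
  rewrite -[X in X%:R * _]card_ord mulr_natl -sumr_const.
  by apply: ler_sum => m _; apply: inner.
move=> H.
have [M0|Mpos] := eqVneq (M%:R : R) 0.
  by rewrite M0 invr0 mul0r divr_ge0 // ltW.
have Mp : 0 < M%:R :> R by rewrite lt0r Mpos ler0n.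
rewrite -(ler_pM2l Mp) mulrA mulfV // mul1r.
done.
Qed.

Lemma sum_const_filter (R : realType) (E : pred nat) (T : nat) (q : R) :
  \sum_(1 <= t < T.+1 | E t) q = q * (count E (iota 1 T))%:R.
Proof.
rewrite -big_filter big_const_seq /= /index_iota subn1 /= count_filter.
move: (count _ _) => n; elim: n => [|n IH] /=; first by rewrite mulr0.
by rewrite IH -addn1 natrD mulrDr mulr1 addrC.
Qed.

Lemma Kfun_ge0 (R : realType) (z : R) T : (1 <= T)%N -> 0 <= Kfun z T.
Proof.
move=> T1; by rewrite /Kfun mulr_ge0 ?powR_ge0 // ln_ge0 // ler1n.

Qed.

Lemma Kfun_mono (R : realType) (z : R) t T : 0 <= z -> (1 <= t <= T)%N -> Kfun z t <= Kfun z T.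
Proof.
move=> z0 /andP[t1 tT]; rewrite /Kfun.
apply: ler_pM; rewrite ?powR_ge0 ?ln_ge0 ?ler1n //.
  by apply: ge0_ler_powR; rewrite ?nnegrE ?ler0n ?ler_nat.
by rewrite ler_ln ?posrE ?ltr0n ?ler_nat // (leq_trans t1).
Qed.

Lemma hT_bound (R : realType) T (gamma : R) : (1 <= T)%N -> 0 <= gamma ->
  ((hT T gamma).-1.+1)%:R <= 2 * (T%:R : R) `^ gamma.
Proof.
move=> T1 g0; set x := (T%:R : R) `^ gamma.
have x1 : 1 <= x.
  have T1' : 1 <= (T%:R : R) by rewrite ler1n.
  by have := ler_powR T1' g0; rewrite powRr0.
have c0 : 0 < Num.ceil x.
  by rewrite -(ltr_int R) (lt_le_trans _ (ceil_ge x)) // (lt_le_trans _ x1).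
have -> : ((hT T gamma).-1.+1 = hT T gamma)%N.
  by rewrite prednK // /hT absz_gt0 gt_eqF.
rewrite /hT natr_absz gtr0_norm //.
have := ceil_itv x => /andP[H _].
rewrite intrD (intrN R 1) in H.
have : (Num.ceil x)%:~R < x + 1 by rewrite -ltrBlDr.
move=> H2; apply: le_trans (ltW H2) _.
by rewrite mulr2n mulrDl mul1r lerD2l.
Qed.
Theorem lemma1 (R : realType) (N M T : nat)
    (Nset : nat -> 'I_M -> {set 'I_N}) (y : nat -> 'I_N -> R) (c : 'I_N -> R -> R)
    (B : R) (phi : nat -> 'I_N -> 'I_M -> R * R) (p : 'I_N -> 'I_M -> R * R -> R)
    (z gamma cmin : R)
    (Omega : finType) (P : Omega -> R) (X : nat -> 'I_N -> 'I_M -> Omega -> R)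
    (sopt : nat -> 'I_M -> {set 'I_N}) (s : Omega -> nat -> 'I_M -> {set 'I_N}) :
  0 < B ->
  (forall n, {homo c n : a b / a <= b}) ->
  (forall t n, (1 <= t <= T)%N -> 0 < c n (y t n)) ->
  (forall t n, (1 <= t <= T)%N -> c n (y t n) <= B) ->
  is_cmin T c y cmin ->
  (forall t n m, in_unit_square (phi t n m)) ->
  (forall n m x, 0 <= p n m x <= 1) ->
  0 < z < 1 -> 0 < gamma < 2^-1 ->
  (* probability distribution on the finite outcome space *)
  (forall w, 0 <= P w) -> \sum_w P w = 1 ->
  (* participation indicators: {0,1}-valued, Bernoulli with mean p_{n,m}(phi^t_{n,m}) *)
  (forall t n m w, X t n m w = 0 \/ X t n m w = 1) ->
  (forall t n m, (1 <= t <= T)%N -> n \in Nset t m ->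
     \sum_w P w * X t n m w = p n m (phi t n m)) ->
  (* oracle decisions *)
  (forall t, (1 <= t <= T)%N ->
     is_oracle (Nset t) (fun n => c n (y t n)) B (fun n m => p n m (phi t n m)) (sopt t)) ->
  (* COCS with K(t) = t^z log t and h_T = ceil(T^gamma), in every realization *)
  (forall w t, (1 <= t <= T)%N ->
     cocs_round (hT T gamma) phi (s w) (fun tau n m => X tau n m w)
       (Kfun z) Nset (fun tau n => c n (y tau n)) B t) ->
  \sum_w P w * regret_explore T (hT T gamma) phi (Kfun z) Nset sopt (s w)
                  (fun tau n m => X tau n m w)
  <= 4%:R * (N ^ 2)%:R * M%:R * B / cmin
     * ((T%:R : R) `^ (z + 2%:R * gamma) * ln (T%:R : R) + (T%:R : R) `^ (2%:R * gamma)).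
Proof.
move=> B0 cmono cpos cleB [cminle [n0 [t0 [t0T cm_eq]]]] unitsq p01 /andP[z0 z1]
  /andP[g0 g1] P0 P1 X01 Xmean oracle cocs.
have T1 : (1 <= T)%N by case/andP: t0T => a b; exact: leq_trans a b.
have cm0 : 0 < cmin by rewrite -cm_eq; apply: cpos.
have N1 : (1 <= N)%N by exact: (leq_ltn_trans (leq0n n0) (ltn_ord n0)).
set q := B / cmin.
have q0 : 0 <= q by rewrite divr_ge0 // ltW.
set h := hT T gamma.
set hh := h.-1.+1.
set Kmax := Kfun z T.
set RHS := (Z9 in _ <= Z9).
suff perw : forall w, regret_explore T h phi (Kfun z) Nset sopt (s w)
                  (fun tau n m => X tau n m w) <= RHS.
  apply: (@le_trans _ _ (\sum_w P w * RHS)).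
    by apply: ler_sum => w _; apply: ler_wpM2l.
  by rewrite -mulr_suml P1 mul1r.
move=> w.
set E := exploration_round h phi (s w) (Kfun z) Nset.
rewrite /regret_explore -/E.
apply: (@le_trans _ _ (\sum_(1 <= t < T.+1 | E t) q)).
  rewrite big_nat_cond [Z9 in _ <= Z9]big_nat_cond.
  apply: ler_sum => t /andP[/andP[t1 tT] Et].
  have tr : (1 <= t <= T)%N by rewrite t1 -ltnS.
  have [orf _] := oracle t tr.
  rewrite lerBlDr; apply: (@le_trans _ _ q).
    apply: (@util_le R N M _ _ _ _ _ cmin orf cm0 (ltW B0)) => [n|n m]; first exact: cminle.
    by case: (X01 t n m w) => ->; rewrite ?ler01.
  by rewrite lerDl; apply: util_ge0 => n m; case: (X01 t n m w) => ->.
rewrite sum_const_filter.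
pose key := ('I_N * 'I_M * 'I_hh * 'I_hh)%type.
pose Q (k : key) : pred nat := fun t =>
  [&& k.1.1.1 \in s w t k.1.1.2,
      cell h (phi t k.1.1.1 k.1.1.2) == (val k.1.2, val k.2) &
      (counter h phi (s w) t k.1.1.1 k.1.1.2 (val k.1.2, val k.2))%:R <= Kfun z t].
have cnt_le : ((count E (iota 1 T))%:R : R) <= (#|{: key}|)%:R * (Kmax + 1).
  apply: (@le_trans _ _ ((\sum_(k : key) count (Q k) (iota 1 T))%:R)).
    rewrite ler_nat; apply: count_cover => t tin Et.
    have tr : (1 <= t <= T)%N by move: tin; rewrite mem_iota add1n ltnS.
    have Et' : exploration_round h phi (s w) (Kfun z) Nset t = true := Et.
    have := cocs w t tr; rewrite /cocs_round /= Et' => -[feas maxu _].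
    case/existsP: Et => m0 /existsP[n1 ue].
    pose d : decision N M := fun m : 'I_M => if m == m0 then ([set n1] : {set 'I_N}) else finset.set0.
    have fd : feasible (Nset t) (fun n => c n (y t n)) B d.
      split.
      - move=> m; rewrite /d; case: eqP => [->|_].
          by rewrite finset.sub1set; case/andP: ue.
        exact: finset.sub0set.
      - move=> m; rewrite /d; case: eqP => _.
          by rewrite big_set1; apply: cleB.
        by rewrite big_set0 ltW.
      - move=> m m' mm'; rewrite /d; case: (eqVneq m m0) => [Em|_].
          rewrite -Em eq_sym (negbTE mm').
          by rewrite disjoint_sym; apply: eq_disjoint0 => x; rewrite inE.
        by apply: eq_disjoint0 => x; rewrite inE.
    have nd : (1 <= n_under h phi (s w) (Kfun z) Nset t d)%N.
      rewrite /n_under (bigD1 m0) //= {1}/d eqxx.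
      apply: leq_trans (leq_addr _ _).
      rewrite card_gt0; apply/set0Pn; exists n1; by rewrite !inE eqxx ue.
    have pos := leq_trans nd (maxu d fd).
    have [m Hm] : exists m, (0 < #|[set n in s w t m | under_explored h phi (s w) (Kfun z) Nset t n m]|)%N.
      apply/existsP; move: pos; apply: contraLR => /existsPn H.
      rewrite -leqNgt leqn0 /n_under; apply/eqP/big1 => m _.
      by move: (H m); rewrite lt0n negbK => /eqP.
    case/card_gt0P: Hm => n; rewrite inE => /andP[ns uen].
    set cc := cell h (phi t n m) in uen *.
    have ccb : ((cc.1 < hh) && (cc.2 < hh))%N.
      by rewrite /cc /cell /hh /= !ltnS !geq_minr.
    case/andP: ccb => c1 c2.
    exists (n, m, inord cc.1, inord cc.2).
    rewrite /Q /= !inordK // ns.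
    rewrite -[(cc.1, cc.2)]surjective_pairing eqxx /=.
    by case/andP: uen.
  rewrite natr_sum.
  apply: (@le_trans _ _ (\sum_(k : key) (Kmax + 1))).
    apply: ler_sum => k _.
    apply: (@count_key R T (Q k) (hit h phi (s w) k.1.1.1 k.1.1.2 (val k.1.2, val k.2))
      (fun t => counter h phi (s w) t k.1.1.1 k.1.1.2 (val k.1.2, val k.2))).
    - exact: Kfun_ge0.
    - by move=> t; rewrite /counter size_filter.
    - by move=> t /and3P[a b _]; rewrite /hit a b.
    - move=> t tr /and3P[_ _ cnd]; apply: le_trans cnd _.
      exact: (@Kfun_mono R z t T (ltW z0) tr).
    - exact: leqnn.
  by rewrite sumr_const mulr_natl.
have hb : (hh%:R : R) <= 2 * (T%:R : R) `^ gamma := @hT_bound R T gamma T1 (ltW g0).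
set a := (T%:R : R) `^ gamma in hb.
have a0 : 0 <= a by apply: powR_ge0.
have T0 : (T%:R : R) != 0 by rewrite pnatr_eq0 -lt0n.
have e2 : (T%:R : R) `^ (2%:R * gamma) = a * a.
  by rewrite mulr_natl mulr2n powRD // T0 implybT.
have ez : (T%:R : R) `^ (z + 2%:R * gamma) = (T%:R : R) `^ z * (a * a).
  by rewrite powRD ?T0 ?implybT // e2.
rewrite /RHS ez e2.
move: cnt_le; rewrite !card_prod !card_ord !natrM => cnt_le.
have K0 : 0 <= Kmax + 1 by rewrite addr_ge0 // Kfun_ge0.
have NN : (N%:R : R) <= (N ^ 2)%:R by rewrite ler_nat (expnS N 1) expn1 leq_pmull.
have P1' : (N%:R * M%:R * hh%:R * hh%:R : R) <= (N ^ 2)%:R * M%:R * (2 * a) * (2 * a).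
  apply: ler_pM; rewrite ?mulr_ge0 ?ler0n //.
  apply: ler_pM; rewrite ?mulr_ge0 ?ler0n //.
  by apply: ler_pM; rewrite ?ler0n.
apply: (le_trans (ler_wpM2l q0 cnt_le)).
apply: (le_trans (ler_wpM2l q0 (ler_wpM2r K0 P1'))).
rewrite /q /Kmax /Kfun.
rewrite natrX le_eqVlt; apply/orP; left; apply/eqP; ring.
Qed.
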